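(* Let $d\ge 1$ and let $\beta=(\beta_1,\ldots,\beta_{d+1}) \in \mathbb{R}^{d+1}$ satisfy $\beta_1 \ge \beta_2 \ge \cdots \ge \beta_{d+1} \ge 0$, $\beta_1+\cdots+\beta_{d+1}=1$, and, for every $t \in \{1,\dots,d\}$, the inequality \[ \mathrm{PS}(t):\quad \prod_{i=1}^t (\beta_i - \beta_{d+1}) \le \sum_{j=t+1}^{d+1} (\beta_j - \beta_{d+1}) + (d+1)\beta_{d+1}. \] Then: (a) $\beta_t > 0$ for every $t \in \{1,\dots,d+1\}$; (b) for every $t \in \{1,\dots,d\}$, at least one of the inequalities $\beta_t \ge \beta_{t+1}$ and $\mathrm{PS}(t)$ is strict; (c) if for some $\ell \in \{1,\dots,d\}$ the inequality $\mathrm{PS}(i)$ holds with equality for every $i \in \{1,\dots,\ell\}$, then $\beta_i = \frac{1}{s_i} + \beta_{d+1}$ for every $i \in \{1,\dots,\ell\}$.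
   Context: The Sylvester sequence is defined by $s_1 := 2$ and $s_i := 1 + s_1 s_2 \cdots s_{i-1}$ for $i \ge 2$. *)

(* Defs.v *)
From HB Require Import structures.
From mathcomp Require Import all_boot all_order all_algebra.
Set Implicit Arguments. Unset Strict Implicit. Unset Printing Implicit Defensive.
Import Order.TTheory GRing.Theory Num.Theory.

(* sylv_prod n = s_1 * ... * s_n  (empty product = 1). *)
Fixpoint sylv_prod (n : nat) : nat :=
  match n with 0 => 1 | n'.+1 => sylv_prod n' * (sylv_prod n' + 1) end.

(* Sylvester sequence, 1-indexed: s_1 = 2, s_i = 1 + s_1 ... s_(i-1). *)
Definition sylvester (i : nat) : nat := (sylv_prod i.-1).+1.

Lemma sylvester1 : sylvester 1 = 2. Proof. by []. Qed.

Lemma sylvester_rec (i : nat) : 2 <= i ->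
  sylvester i = 1 + \prod_(1 <= j < i) sylvester j.
Proof.
case: i => // i _; rewrite /sylvester /= add1n; congr S.
elim: i => [|i IH]; first by rewrite big_geq.
by rewrite big_nat_recr //= -IH /sylvester /= addn1.
Qed.

Local Open Scope ring_scope.

(* beta is indexed by 1..d+1 (values of beta outside this range are irrelevant). *)
Definition PS_lhs (R : realFieldType) (d : nat) (beta : nat -> R) (t : nat) : R :=
  \prod_(1 <= i < t.+1) (beta i - beta d.+1).

Definition PS_rhs (R : realFieldType) (d : nat) (beta : nat -> R) (t : nat) : R :=
  \sum_(t.+1 <= j < d.+2) (beta j - beta d.+1) + d.+1%:R * beta d.+1.

(* Main.v *)
Require Import Defs.
From HB Require Import structures.
From mathcomp Require Import all_boot all_order all_algebra.
From mathcomp Require Import ring lra zify.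
Import Order.TTheory GRing.Theory Num.Theory.
Local Open Scope ring_scope.

Definition Ssum (R : realFieldType) (d : nat) (beta : nat -> R) (t : nat) : R :=
  \sum_(1 <= i < t.+1) (beta i - beta d.+1).

Arguments Ssum {R}.
Lemma PS_lhs0 (R : realFieldType) (d : nat) (beta : nat -> R) : PS_lhs d beta 0 = 1.
Proof. by rewrite /PS_lhs big_geq. Qed.
Lemma Ssum0 (R : realFieldType) (d : nat) (beta : nat -> R) : Ssum d beta 0 = 0.
Proof. by rewrite /Ssum big_geq. Qed.
Lemma PS_lhsS (R : realFieldType) (d : nat) (beta : nat -> R) (t : nat) :
  PS_lhs d beta t.+1 = PS_lhs d beta t * (beta t.+1 - beta d.+1).
Proof. by rewrite /PS_lhs big_nat_recr. Qed.
Lemma SsumS (R : realFieldType) (d : nat) (beta : nat -> R) (t : nat) :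
  Ssum d beta t.+1 = Ssum d beta t + (beta t.+1 - beta d.+1).
Proof. by rewrite /Ssum big_nat_recr. Qed.

Lemma rhsE (R : realFieldType) (d : nat) (beta : nat -> R) (t : nat) : \sum_(1 <= i < d.+2) beta i = 1 ->
  (t <= d.+1)%N -> PS_rhs d beta t = 1 - Ssum d beta t.
Proof.
move=> H ht.
have E : \sum_(1 <= i < d.+2) (beta i - beta d.+1) = 1 - d.+1%:R * beta d.+1.
  by rewrite sumrB sumr_const_nat H subn1 /= mulr_natl.
rewrite (big_cat_nat _ (n:=t.+1)) //= in E.
rewrite /PS_rhs /Ssum; move: E.
set A := \sum_(1 <= i < t.+1) _; set B := \sum_(t.+1 <= i < d.+2) _.
set k := _ * _; lra.
Qed.

Lemma sylv_prod_gt0 n : (0 < sylv_prod n)%N.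
Proof. by elim: n => //= n IH; rewrite muln_gt0 IH addn1. Qed.

Lemma mono (R : realFieldType) (beta : nat -> R) d : (forall i : nat, (1 <= i <= d)%N -> beta i.+1 <= beta i) ->
  forall i n, (1 <= i)%N -> (i + n <= d.+1)%N -> beta (i + n)%N <= beta i.
Proof.
move=> H i n hi; elim: n => [|n IH] hn; first by rewrite addn0 lexx.
apply: le_trans (IH _); last by lia.
rewrite addnS; apply: H; lia.
Qed.

Lemma P_pos (R : realFieldType) (d : nat) (beta : nat -> R) (t : nat) :
  (forall i, (1 <= i <= t)%N -> 0 < beta i - beta d.+1) -> 0 < PS_lhs d beta t.
Proof.
elim: t => [|t IH] H; first by rewrite PS_lhs0.
rewrite PS_lhsS mulr_gt0 //; last by apply: H; lia.
by apply: IH => i hi; apply: H; lia.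
Qed.

Lemma P_ge0 (R : realFieldType) (d : nat) (beta : nat -> R) (t : nat) :
  (forall i, (1 <= i <= t)%N -> 0 <= beta i - beta d.+1) -> 0 <= PS_lhs d beta t.
Proof.
elim: t => [|t IH] H; first by rewrite PS_lhs0.
rewrite PS_lhsS mulr_ge0 //; last by apply: H; lia.
by apply: IH => i hi; apply: H; lia.
Qed.

Lemma S_mono (R : realFieldType) (d : nat) (beta : nat -> R) (t n : nat) :
  (forall i, (1 <= i <= t + n)%N -> 0 <= beta i - beta d.+1) -> Ssum d beta t <= Ssum d beta (t + n)%N.
Proof.
elim: n => [|n IH] H; first by rewrite addn0.
rewrite addnS SsumS; apply: le_trans (IH _) _.
  by move=> i hi; apply: H; lia.
rewrite lerDl; apply: H; lia.
Qed.

Theorem lemma2p1 (R : realFieldType) (d : nat) (beta : nat -> R) :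
  (1 <= d)%N ->
  (forall i : nat, (1 <= i <= d)%N -> beta i.+1 <= beta i) ->
  0 <= beta d.+1 ->
  \sum_(1 <= i < d.+2) beta i = 1 ->
  (forall t : nat, (1 <= t <= d)%N -> PS_lhs d beta t <= PS_rhs d beta t) ->
  [/\ (forall t : nat, (1 <= t <= d.+1)%N -> 0 < beta t),
      (forall t : nat, (1 <= t <= d)%N ->
         beta t.+1 < beta t \/ PS_lhs d beta t < PS_rhs d beta t) &
      (forall l : nat, (1 <= l <= d)%N ->
         (forall i : nat, (1 <= i <= l)%N -> PS_lhs d beta i = PS_rhs d beta i) ->
         forall i : nat, (1 <= i <= l)%N ->
           beta i = ((sylvester i)%:R)^-1 + beta d.+1)].
Proof.
move=> hd Hmon hc Hsum HPS.
have Hx : forall i, (1 <= i <= d.+1)%N -> 0 <= beta i - beta d.+1.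
  move=> i hi; rewrite subr_ge0.
  have := @mono R beta d Hmon i (d.+1 - i)%N; rewrite subnKC; last by lia.
  by apply; lia.
have Hle : forall i j, (1 <= i)%N -> (i <= j <= d.+1)%N -> beta j <= beta i.
  move=> i j hi hij; have := @mono R beta d Hmon i (j - i)%N.
  by rewrite subnKC; [apply; lia | lia].
have Hr : forall t, (t <= d.+1)%N -> PS_rhs d beta t = 1 - Ssum d beta t.
  by move=> t ht; apply: rhsE.
have ST : Ssum d beta d.+1 = 1 - d.+1%:R * beta d.+1.
  move: (Hr d.+1 (leqnn _)); rewrite /PS_rhs big_geq // add0r; lra.
have HP1 : forall u, (u <= d)%N -> PS_lhs d beta u <= 1.
    case=> [|u] hu; first by rewrite PS_lhs0.
    have := HPS u.+1 ltac:(lia); rewrite Hr; last by lia.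
    have : 0 <= Ssum d beta u.+1.
      have := @S_mono R d beta 0 u.+1.
      by rewrite Ssum0 add0n; apply => i hi; apply: Hx; lia.
    lra.
have Hc : 0 < beta d.+1.
  rewrite lt_def hc andbT; apply/eqP => c0.
  have Hk : forall k, (k <= d)%N -> Ssum d beta (d - k)%N = 1.
    elim=> [|k IH] hk.
      by move: ST; rewrite subn0 SsumS c0 subrr mulr0 subr0 addr0.
    have E := IH (ltnW hk).
    set t := (d - k.+1)%N.
    have tE : (d - k = t.+1)%N by rewrite /t; lia.
    rewrite tE in E; move: E.
    have hP := HPS t.+1 ltac:(lia); rewrite Hr in hP; last by lia.
    move=> E; rewrite E subrr in hP.
    have xt0 : beta t.+1 - beta d.+1 = 0.
      apply/eqP; rewrite eq_le Hx ?andbT; last by lia.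
      rewrite leNgt; apply/negP => xp.
      have : 0 < PS_lhs d beta t.+1.
        apply: P_pos => i hi; apply: lt_le_trans xp _; rewrite lerD2r.
        by apply: Hle; lia.
      by rewrite ltNge hP.
    by rewrite -E SsumS xt0 addr0.
  have := Hk d (leqnn _); rewrite subnn Ssum0 => /eqP; rewrite eq_sym oner_eq0.
  by [].
split.
- move=> t ht; apply: lt_le_trans Hc _; rewrite -subr_ge0; exact: Hx.
- move=> t ht; rewrite !ltNge; apply/orP; rewrite -negb_and; apply/negP.
  move=> /andP [h1 h2].
  have xe : beta t.+1 = beta t by apply/eqP; rewrite eq_le h1 Hmon.
  have hP := HPS t ht; rewrite Hr in hP h2; try lia.
  have Pe : PS_lhs d beta t = 1 - Ssum d beta t by apply/eqP; rewrite eq_le hP h2.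
  have Sle : Ssum d beta (t + (d.+1 - t))%N <= Ssum d beta d.+1 by rewrite subnKC; last lia.
  have Sm := @S_mono R d beta t (d.+1 - t)%N.
  rewrite subnKC in Sm; last by lia.
  have {}Sm := Sm ltac:(move=> i hi; apply: Hx; lia).
  have xt0 := Hx t ltac:(lia).
  case: (ltP 0 (beta t - beta d.+1)) => [xp|]; last first.
    move=> xn; have x0 : beta t - beta d.+1 = 0 by apply/eqP; rewrite eq_le xn xt0.
    case: t ht {h1 h2 xe hP Sle Sm xt0 xn} Pe x0 => // t' ht Pe x0.
    move: Pe; rewrite PS_lhsS x0 mulr0 => Pe.
    have Sm := @S_mono R d beta t'.+1 (d.+1 - t'.+1)%N.
    rewrite subnKC in Sm; last by lia.
    have {}Sm := Sm ltac:(move=> i hi; apply: Hx; lia).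
    move: Sm; rewrite ST; have : 0 < d.+1%:R * beta d.+1 by rewrite mulr_gt0 ?ltr0Sn.
    lra.
  have td : (t < d)%N.
    rewrite ltn_neqAle; apply/andP; split; last by lia.
    apply/eqP => tdE; move: xp; rewrite -xe tdE subrr ltxx; done.
  have hP1 := HPS t.+1 ltac:(lia); rewrite Hr in hP1; last by lia.
  move: hP1; rewrite PS_lhsS SsumS xe.
  case: t ht {h1 h2 hP Sle Sm xt0 td} xe Pe xp => [//|t'] ht xe Pe xp.
  move: Pe; rewrite PS_lhsS SsumS.
  set p := PS_lhs d beta t'; set s := Ssum d beta t'; set x := beta t'.+1 - _.
  have p0 : 0 <= p by apply: P_ge0 => i hi; apply: Hx; lia.
  have p1 : p <= 1 by apply: HP1; lia.
  have {}xp : 0 < x by exact: xp.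
  move=> Pe hP1.
  have h0 : p * x * x + x <= p * x.
    lra.
  have : x * (p * x + (1 - p)) <= 0.
    have -> : x * (p * x + (1 - p)) = p * x * x + x - p * x by ring.
    lra.
  have : 0 < p * x + (1 - p).
    case: (ltP p 1) => hp; first by have := mulr_ge0 p0 (ltW xp); lra.
    have -> : p = 1 by apply/eqP; rewrite eq_le p1 hp.
    lra.
  move=> q; have := mulr_gt0 xp q; lra.
- move=> l hl Heq.
  have Hi : forall i, (i <= l)%N -> PS_lhs d beta i = (sylv_prod i)%:R^-1 /\
        ((1 <= i)%N -> beta i = ((sylvester i)%:R)^-1 + beta d.+1).
    elim=> [|i IH] hi; first by rewrite PS_lhs0 /= invr1.
    have [IH1 _] := IH (ltnW hi).
    have E1 := Heq i.+1 ltac:(lia); rewrite Hr in E1; last by lia.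
    have E0 : PS_lhs d beta i = 1 - Ssum d beta i.
      case: i hi {IH IH1 E1} => [|i'] hi; first by rewrite PS_lhs0 Ssum0 subr0.
      by rewrite -Hr; [apply: Heq|]; lia.
    move: E1; rewrite PS_lhsS SsumS.
    have q0 := sylv_prod_gt0 i.
    have qn : (sylv_prod i)%:R != 0 :> R by rewrite pnatr_eq0 -lt0n.
    move: E0 IH1; set p := PS_lhs d beta i; set s := Ssum d beta i.
    set x := beta i.+1 - _; move=> E0 IH1 E1.
    have xe : x = ((sylvester i.+1)%:R)^-1.
      rewrite /sylvester /= -addn1 natrD.
      have : x * (p + 1) = p by lra.
      rewrite IH1 => {}E1.
      set q := (sylv_prod i)%:R in E1 qn *.
      have q1 : q + 1%:R != 0 by rewrite /q -natrD pnatr_eq0 addn1.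
      have E2 : x * (q + 1%:R) = 1.
        have -> : x * (q + 1%:R) = (x * (q^-1 + 1)) * q by field.
        by rewrite E1 mulVf.
      by apply: (mulIf q1); rewrite E2 mulVf.
    split.
      rewrite xe IH1 /sylvester /= -addn1 natrM !natrD.
      have q1 : (sylv_prod i)%:R + 1%:R != 0 :> R by rewrite -natrD pnatr_eq0 addn1.
      by field; rewrite q1 qn.
    by move=> _; rewrite -xe /x subrK.
  by move=> i hi; apply: (Hi i ltac:(lia)).2; lia.
Qed.
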